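(* There is an absolute constant $C>0$ such that for every $N\in\mathbb{N}$, all functions $f_0,f_1,f_2\colon\mathbb{Z}^2\to\mathbb{C}$ with $|f_i|\le1$ supported in $[\pm2N]^2$, and every $f_3\colon\mathbb{Z}\to\mathbb{C}$ with $|f_3|\le1$ supported in $[N]$, \[ \Big|\mathbb{E}_{x\in[\pm2N]^2,\,n\in[N]}f_0(x)f_1(x+ne_1)f_2(x+ne_2)f_3(n)\Big|\le CN^{-1/2}\|f_3\|_{U^3}, \] where $e_1=(1,0)$, $e_2=(0,1)$.
   Context: $[N]=\{1,\dots,N\}$, $[\pm N]=[-N,N]\cap\mathbb{Z}$, $\mathbb{E}_{a\in A}$ is the average over the finite set $A$. For $f\colon\mathbb{Z}\to\mathbb{C}$ and $h\in\mathbb{Z}$, $\Delta_hf(x)=f(x)\overline{f(x+h)}$, $\Delta_{h_1,\dots,h_s}=\Delta_{h_1}\cdots\Delta_{h_s}$. For finitely supported $f$, the unnormalised Gowers norm is $\|f\|_{U^s}=\big(\sum_{x,h_1,\dots,h_s\in\mathbb{Z}}\Delta_{h_1,\dots,h_s}f(x)\big)^{1/2^s}$. *)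

(* Defs.v *)
From mathcomp Require Import all_boot all_algebra.
From mathcomp Require Import all_classical all_reals all_analysis.
From mathcomp Require Import complex.
Import GRing.Theory Num.Theory.
Local Open Scope ring_scope.

Definition irange (a b : int) : seq int :=
  [seq a + (k%:Z) | k <- iota 0 (absz (b - a + 1))].

Definition cmod {R : rcfType} (z : R[i]) : R := @complex.Re R `|z|.

Definition Delta {R : rcfType} (h : int) (f : int -> R[i]) : int -> R[i] :=
  fun x => f x * Num.conj (f (x + h)).

(* unnormalised U^3 Gowers norm of a finitely supported f : Z -> C:
   ( sum_{x,h1,h2,h3 in Z} Delta_{h1,h2,h3} f(x) )^(1/8),
   sums over Z being finite-support sums (fsbig). The sum is a
   nonnegative real, so we take its modulus before the real 1/8 power. *)
Definition gowersU3 {R : realType} (f : int -> R[i]) : R :=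
  powR (cmod (\sum_(x \in [set: int]) \sum_(h1 \in [set: int])
               \sum_(h2 \in [set: int]) \sum_(h3 \in [set: int])
                 Delta h1 (Delta h2 (Delta h3 f)) x)) (8^-1).

(* Main.v *)
Require Import Defs.
From mathcomp Require Import all_boot all_algebra.
From mathcomp Require Import all_classical all_reals all_analysis.
From mathcomp Require Import complex.
From mathcomp Require Import zify ring lra.
Import GRing.Theory Num.Theory.
Import order.Order.TTheory.
Local Open Scope ring_scope.
Lemma mem_irange (a b x : int) : a <= b -> (x \in irange a b) = (a <= x <= b).
Proof.
move=> ab; apply/mapP/idP.
  case=> k; rewrite mem_iota => /andP[_ hk] ->. apply/andP; split; lia.
move=> /andP[h1 h2]; exists (absz (x - a)); first by rewrite mem_iota; apply/andP; split; lia.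
lia.
Qed.

Lemma irange_uniq (a b : int) : uniq (irange a b).
Proof. rewrite map_inj_uniq ?iota_uniq // => i j /addrI; by case. Qed.

Lemma size_irange a b : size (irange a b) = absz (b - a + 1).
Proof. by rewrite size_map size_iota. Qed.

Section Cmod.
Variable R : rcfType.
Implicit Types x y z : R[i].
Local Open Scope complex_scope.

Lemma cmodE z : `|z| = (cmod z)%:C.
Proof. by rewrite /cmod normc_def. Qed.

Lemma cmod_ge0 z : 0 <= cmod z.
Proof. by rewrite -ler0c -cmodE. Qed.

Lemma cmodM x y : cmod (x * y) = cmod x * cmod y.
Proof. apply: complexI; by rewrite rmorphM -!cmodE normrM. Qed.

Lemma cmodJ x : cmod (Num.conj x) = cmod x.
Proof. apply: complexI; by rewrite -!cmodE norm_conjC. Qed.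

Lemma cmod_sum (I : Type) (s : seq I) (F : I -> R[i]) :
  cmod (\sum_(i <- s) F i) <= \sum_(i <- s) cmod (F i).
Proof.
rewrite -lecR -cmodE.
have -> : ((\sum_(i <- s) cmod (F i))%:C = \sum_(i <- s) `|F i|).
  by rewrite raddf_sum; apply: eq_bigr => i _; rewrite cmodE.
exact: ler_norm_sum.
Qed.

Lemma mulJ x : x * Num.conj x = ((cmod x) ^+ 2)%:C.
Proof. by rewrite -normCK cmodE -rmorphXn. Qed.

Lemma cmodR (r : R) : 0 <= r -> cmod r%:C = r.
Proof. move=> r0; apply: complexI; by rewrite -cmodE ger0_norm // ler0c. Qed.

Lemma cmod_le1_prod x y : cmod x <= 1 -> cmod y <= 1 -> cmod (x * y) <= 1.
Proof.
move=> hx hy; rewrite cmodM.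
have := cmod_ge0 x; have := cmod_ge0 y. nra.
Qed.

End Cmod.

Lemma sum_supp (V : nmodType) (T : eqType) (s t : seq T) (F : T -> V) :
  uniq s -> uniq t -> (forall x, F x != 0 -> (x \in s) && (x \in t)) ->
  \sum_(x <- s) F x = \sum_(x <- t) F x.
Proof.
move=> us ut hF.
rewrite (bigID (fun x => x \in t)) /= [X in _ + X]big1; last first.
  move=> x xt; apply/eqP; apply: contraT => hx; move: (hF x hx).
  by rewrite (negbTE xt) andbF.
rewrite addr0 [RHS](bigID (fun x => x \in s)) /= [X in _ = _ + X]big1; last first.
  move=> x xs; apply/eqP; apply: contraT => hx; move: (hF x hx).
  by rewrite (negbTE xs).
rewrite addr0 -[LHS]big_filter -[RHS]big_filter.
apply: perm_big; apply: uniq_perm; rewrite ?filter_uniq //.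
by move=> x; rewrite !mem_filter andbC.
Qed.

Lemma sum_shift (V : nmodType) (T : eqType) (s : seq T) (g : T -> T) (F : T -> V) :
  injective g -> uniq s -> (forall x, F x != 0 -> (x \in s) && (x \in map g s)) ->
  \sum_(x <- s) F (g x) = \sum_(x <- s) F x.
Proof.
move=> gi us hF; rewrite -(big_map g xpredT F).
apply: sum_supp; rewrite ?map_inj_uniq //.
by move=> x /hF /andP[-> ->].
Qed.

Lemma sum_nz (V : nmodType) (T : Type) (s : seq T) (F : T -> V) :
  \sum_(x <- s) F x != 0 -> exists x, F x != 0.
Proof.
move=> h; have [//|hn] := pselect (exists x, F x != 0).
exfalso; move/eqP: h; apply; apply: big1 => x _; apply/eqP.
apply/negPn/negP => hx; apply: hn; by exists x.
Qed.

Lemma cauchy_schwarz (R : realFieldType) (I : Type) (s : seq I) (a : I -> R) :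
  (\sum_(i <- s) a i) ^+ 2 <= (size s)%:R * \sum_(i <- s) a i ^+ 2.
Proof.
elim: s => [|x s IH]; first by rewrite !big_nil mul0r expr0n.
rewrite !big_cons /=.
move: IH.
set S := \sum_(i <- s) a i; set Q := \sum_(i <- s) a i ^+ 2.
have Q0 : 0 <= Q by apply: sumr_ge0 => i _; exact: sqr_ge0.
have n0 : 0 <= (size s)%:R :> R by [].
rewrite mulrSr.
move: n0; set n := (size s)%:R => n0 IH.
set u := a x.
have k1 : 0 <= n * (n * u ^+ 2 - 2 * u * S + Q).
  have -> : n * (n * u ^+ 2 - 2 * u * S + Q) = (n * u - S) ^+ 2 + (n * Q - S ^+ 2) by ring.
  by rewrite addr_ge0 ?sqr_ge0 // subr_ge0.
have k2 : 0 <= n * u ^+ 2 - 2 * u * S + Q.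
  have [n00|np] := eqVneq n 0.
    have S0 : S ^+ 2 <= 0 by move: IH; rewrite n00 mul0r.
    have S00 : S = 0 by apply/eqP; rewrite -sqrf_eq0 eq_le S0 sqr_ge0.
    by rewrite n00 S00 !mul0r mulr0 subr0 add0r.
  by rewrite -(pmulr_rge0 _ (_ : 0 < n)) // lt0r np.
rewrite -subr_ge0.
have -> : (n + 1) * (u ^+ 2 + Q) - (u + S) ^+ 2 = (n * u ^+ 2 - 2 * u * S + Q) + (n * Q - S ^+ 2) by ring.
by rewrite addr_ge0 // subr_ge0.
Qed.

Lemma cs_gen (R : realFieldType) (I : Type) (s : seq I) (a b : I -> R) (c : R) :
  0 <= c -> (forall i, a i ^+ 2 <= c * b i) ->
  (\sum_(i <- s) a i) ^+ 2 <= (size s)%:R * c * \sum_(i <- s) b i.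
Proof.
move=> c0 h; apply: (le_trans (cauchy_schwarz _ _ s a)).
rewrite -mulrA ler_wpM2l // mulr_sumr; exact: ler_sum.
Qed.

Lemma sum_cmod_le1 (R : rcfType) (I : Type) (s : seq I) (F : I -> R[i]) :
  (forall i, cmod (F i) <= 1) -> cmod (\sum_(i <- s) F i) <= (size s)%:R.
Proof.
move=> h; apply: (le_trans (cmod_sum _ _ _ _)).
elim: s => [|x s IH]; first by rewrite big_nil.
by rewrite big_cons /= -addn1 natrD addrC lerD.
Qed.

Lemma fsT (V : nmodType) (F : int -> V) (r : seq int) :
  uniq r -> (forall i, F i != 0 -> i \in r) ->
  \sum_(i \in [set: int]) F i = \sum_(i <- r) F i.
Proof.
move=> ur h; rewrite (@bigfs V 0 +%R int r predT F ur); last first.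
  move=> i _ ir; apply/eqP; apply: contraT => /h; by rewrite (negbTE ir).
apply: eq_fsbigl; apply/seteqP; split => x //=.
Qed.

Lemma sum_shift' (V : nmodType) (T : eqType) (s : seq T) (g : T -> T) (F H : T -> V) :
  injective g -> uniq s -> (forall x, F x != 0 -> (x \in s) && (x \in map g s)) ->
  (forall y, H y = F (g y)) ->
  \sum_(x <- s) F x = \sum_(y <- s) H y.
Proof.
move=> gi us hF hH; rewrite -(@sum_shift V T s g F gi us hF); apply: eq_bigr => y _; by rewrite hH.
Qed.

Definition pairs (s : seq int) : seq (int * int) := [seq (a, b) | a <- s, b <- s].

Lemma mem_pairs s p : (p \in pairs s) = (p.1 \in s) && (p.2 \in s).
Proof.
case: p => a b /=; apply/allpairsP/andP => [[[x y] /= [hx hy [-> ->]]] //|[ha hb]].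
by exists (a, b).
Qed.

Lemma pairs_uniq s : uniq s -> uniq (pairs s).
Proof. move=> us; apply: allpairs_uniq => // [[a b] [c d]] _ _ //. Qed.

Lemma size_pairs s : size (pairs s) = (size s * size s)%N.
Proof. by rewrite size_allpairs. Qed.

Lemma sum_pairs (V : nmodType) s (F : int * int -> V) :
  \sum_(p <- pairs s) F p = \sum_(a <- s) \sum_(b <- s) F (a, b).
Proof. exact: big_allpairs. Qed.

Definition sh (c : int * int) (p : int * int) := (p.1 + c.1, p.2 + c.2).

Lemma sh_inj c : injective (sh c).
Proof. move=> [a b] [a' b'] [] /addIr -> /addIr -> //. Qed.

Lemma mem_map_sh s c p : (p \in map (sh c) s) = ((p.1 - c.1, p.2 - c.2) \in s).
Proof.
have E : p = sh c (p.1 - c.1, p.2 - c.2) by case: p => a b; rewrite /sh /= !subrK.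
by rewrite {1}E mem_map //; apply: sh_inj.
Qed.

Lemma addc_inj (c : int) : injective (fun y => y + c).
Proof. exact: addIr. Qed.

Lemma mem_map_add s (c x : int) : (x \in map (fun y => y + c) s) = (x - c \in s).
Proof.
have E : x = (fun y => y + c) (x - c) by rewrite /= subrK.
by rewrite {1}E (mem_map (addc_inj c)).
Qed.

Lemma mulnz (R : idomainType) (x y : R) : x * y != 0 -> (x != 0) && (y != 0).
Proof. by rewrite mulf_eq0 negb_or. Qed.

Lemma conjnz (C : numClosedFieldType) (x : C) : Num.conj x != 0 -> x != 0.
Proof. by rewrite conjC_eq0. Qed.

Lemma sqle (R : realFieldType) (a b : R) : 0 <= a -> a <= b -> a ^+ 2 <= b ^+ 2.
Proof. move=> a0 ab; apply: lerXn2r => //; rewrite nnegrE //; exact: le_trans ab. Qed.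

Arguments sqle {R a b}.

Lemma le_of_pow8 (R : realFieldType) (x y : R) : 0 <= x -> 0 <= y -> x ^+ 8 <= y ^+ 8 -> x <= y.
Proof.
move=> x0 y0 h; have := ler_pXn2r (_ : (0 < 8)%N) (_ : x \in Num.nneg) (_ : y \in Num.nneg).
by move=> <-; rewrite ?nnegrE.
Qed.
Arguments le_of_pow8 {R x y}.

Lemma nat_ineq (w N c : nat) : (w <= 9 * N)%N -> (N ^ 3 <= c)%N ->
  (w ^ 20 * N ^ 4 <= c ^ 8 * (9 ^ 3) ^ 8)%N.
Proof.
move=> hw hc.
apply: (@leq_trans ((9 * N) ^ 20 * N ^ 4)); first by rewrite leq_mul2r leq_exp2r // hw orbT.
rewrite expnMn -mulnA -expnD mulnC -expnM.
apply: leq_mul; last first.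
  apply: leq_pexp2l => //.
rewrite (_ : (20 + 4 = 3 * 8)%N) // expnM leq_exp2r //.
Qed.

Lemma final_real (R : realType) (X Y1 Z1 Y2 Z2 Y3 Z3 : R) (w N c : nat) :
  (0 < N)%N -> (w <= 9 * N)%N -> (N ^ 3 <= c)%N ->
  0 <= X -> 0 <= Y1 -> 0 <= Y2 -> 0 <= Y3 -> 0 <= Z3 ->
  X <= Y1 -> Y1 ^+ 2 <= (w * w)%:R * Z1 -> Z1 <= Y2 ->
  Y2 ^+ 2 <= (w * (w * w))%:R * Z2 -> Z2 <= (w * w)%:R * Y3 ->
  Y3 ^+ 2 <= (w * w)%:R * Z3 ->
  c%:R^-1 * X <= (9 ^ 3)%:R * (Num.sqrt N%:R)^-1 * powR Z3 (8^-1).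
Proof.
move=> N0 hw hc X0 Y10 Y20 Y30 Z30 h1 h2 h3 h4 h5 h6.
set w2 : R := (w * w)%:R; set w3 : R := (w * (w * w))%:R.
have w20 : 0 <= w2 by []. have w30 : 0 <= w3 by [].
have hX2 : X ^+ 2 <= w2 * Y2.
  apply: (le_trans (sqle X0 h1)); apply: (le_trans h2); exact: ler_wpM2l.
set K1 := w2 ^+ 2 * (w3 * w2).
have K10 : 0 <= K1 by rewrite /K1; apply: mulr_ge0; [exact: exprn_ge0|exact: mulr_ge0].
have hX4 : X ^+ 4 <= K1 * Y3.
  rewrite (_ : X ^+ 4 = (X ^+ 2) ^+ 2); last by rewrite -exprM.
  apply: (le_trans (sqle (exprn_ge0 _ X0) hX2)); rewrite exprMn /K1 -[_ * (w3 * w2) * Y3]mulrA.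
  apply: ler_wpM2l; first exact: exprn_ge0.
  rewrite -mulrA; apply: (le_trans h4); apply: ler_wpM2l => //.
have hX8 : X ^+ 8 <= K1 ^+ 2 * w2 * Z3.
  rewrite (_ : X ^+ 8 = (X ^+ 4) ^+ 2); last by rewrite -exprM.
  apply: (le_trans (sqle (exprn_ge0 _ X0) hX4)); rewrite exprMn -mulrA.
  apply: ler_wpM2l; first exact: exprn_ge0.
  exact: h6.
have eK : K1 ^+ 2 * w2 = (w ^ 20)%:R.
  have en : (((w * w) ^ 2 * (w * (w * w) * (w * w))) ^ 2 * (w * w) = w ^ 20)%N by ring.
  by rewrite /K1 /w2 /w3 -!natrX -!natrM -natrX -natrM en.
rewrite eK in hX8.
have c0 : (0 < c)%N by apply: (leq_trans _ hc); rewrite expn_gt0 N0.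
have Nr0 : 0 < N%:R :> R by rewrite ltr0n.
have s0 : 0 < Num.sqrt (N%:R : R) by rewrite sqrtr_gt0.
set P := Z3 `^ 8^-1.
have P0 : 0 <= P by apply: powR_ge0.
have P8 : P ^+ 8 = Z3.
  rewrite -(powR_mulrn 8 P0) /P -powRrM mulVf ?powRr1 //.
have s8 : Num.sqrt (N%:R : R) ^+ 8 = N%:R ^+ 4.
  by rewrite (_ : 8 = 2 * 4)%N // exprM sqr_sqrtr // ltW.
rewrite ler_pdivrMl ?ltr0n //.
have R0 : 0 <= c%:R * ((9 ^ 3)%:R / Num.sqrt N%:R * P) :> R.
  have si : 0 <= (Num.sqrt (N%:R : R))^-1 by rewrite invr_ge0 ltW.
  by rewrite !mulr_ge0.
have hXn : X \in Num.nneg by rewrite nnegrE.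
have hRn : (c%:R * ((9 ^ 3)%:R / Num.sqrt N%:R * P)) \in Num.nneg by rewrite nnegrE.
apply: (le_of_pow8 X0 R0).
have eR : (c%:R * ((9 ^ 3)%:R / Num.sqrt N%:R * P)) ^+ 8 =
    ((c ^ 8 * (9 ^ 3) ^ 8)%:R / (N ^ 4)%:R) * Z3 :> R.
  rewrite !exprMn exprVn P8 s8 natrM !natrX.
  by field; rewrite gt_eqF.
rewrite eR; apply: (le_trans hX8); apply: ler_wpM2r => //.
rewrite ler_pdivlMr ?ltr0n ?expn_gt0 ?N0 // -natrM ler_nat.
exact: nat_ineq.
Qed.

Section Lemma34Proof.
Local Open Scope complex_scope.
Lemma cmod_mul_le (R : rcfType) (x y : R[i]) : cmod x <= 1 -> cmod (x * y) <= cmod y.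
Proof. move=> hx; rewrite cmodM; have := cmod_ge0 _ y; have := cmod_ge0 _ x; nra. Qed.

Lemma cmod_mulJ_le1 (R : rcfType) (x y : R[i]) :
  cmod x <= 1 -> cmod y <= 1 -> cmod (x * Num.conj y) <= 1.
Proof. move=> hx hy; apply: cmod_le1_prod => //; by rewrite cmodJ. Qed.

Lemma cmod_natV (R : rcfType) (n : nat) : cmod ((n%:R : R[i])^-1) = (n%:R : R)^-1.
Proof.
have -> : (n%:R : R[i])^-1 = ((n%:R : R)^-1)%:C by rewrite fmorphV rmorph_nat.
by rewrite cmodR // invr_ge0.
Qed.

Section Main.
Variables (R : realType) (N : nat) (f0 f1 f2 : int * int -> R[i]) (f3 : int -> R[i]).
Hypothesis N0 : (0 < N)%N.
Hypothesis b0 : forall x, cmod (f0 x) <= 1.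
Hypothesis b1 : forall x, cmod (f1 x) <= 1.
Hypothesis b2 : forall x, cmod (f2 x) <= 1.
Hypothesis b3 : forall n, cmod (f3 n) <= 1.
Hypothesis supp : forall x : int * int,
       ~ (`|x.1| <= (2 * N)%:Z /\ `|x.2| <= (2 * N)%:Z) ->
       f0 x = 0 /\ f1 x = 0 /\ f2 x = 0.
Hypothesis supp3 : forall n : int, ~ (1 <= n /\ n <= N%:Z) -> f3 n = 0.

Let box (x : int * int) := (- (2 * N)%:Z <= x.1 <= (2 * N)%:Z) && (- (2 * N)%:Z <= x.2 <= (2 * N)%:Z).

Lemma box_of x : f0 x != 0 \/ f1 x != 0 \/ f2 x != 0 -> box x.
Proof.
move=> h; rewrite /box -!ler_norml.
have [[-> ->]//|hn] := pselect (`|x.1| <= (2 * N)%:Z /\ `|x.2| <= (2 * N)%:Z).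
exfalso; case: (supp x hn) => e0 [e1 e2]; move: h; rewrite e0 e1 e2 eqxx; by case => [|[]].
Qed.

Lemma s0 x : f0 x != 0 -> box x. Proof. by move=> h; apply: box_of; left. Qed.
Lemma s1 x : f1 x != 0 -> box x. Proof. by move=> h; apply: box_of; right; left. Qed.
Lemma s2 x : f2 x != 0 -> box x. Proof. by move=> h; apply: box_of; right; right. Qed.
Lemma s3 n : f3 n != 0 -> (1 <= n <= N%:Z).
Proof.
move=> h; have [[-> ->]//|hn] := pselect (1 <= n /\ n <= N%:Z).
by move: h; rewrite (supp3 n hn) eqxx.
Qed.

Let M : int := (4 * N)%:Z.
Let W := irange (- M) M.
Let W2 := pairs W.
Let w := size W.

Lemma memW x : (x \in W) = (- M <= x <= M).
Proof. by rewrite mem_irange //; rewrite /M; lia. Qed.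

Lemma memW2 x : (x \in W2) = (- M <= x.1 <= M) && (- M <= x.2 <= M).
Proof. by rewrite mem_pairs !memW. Qed.

Lemma Wu : uniq W. Proof. exact: irange_uniq. Qed.
Lemma W2u : uniq W2. Proof. exact/pairs_uniq/Wu. Qed.

Definition F (x : int * int) := \sum_(n <- W) f1 (x.1 + n, x.2) * f2 (x.1, x.2 + n) * f3 n.

Definition Sraw := \sum_(x1 <- irange (- (2 * N)%:Z) (2 * N)%:Z)
          \sum_(x2 <- irange (- (2 * N)%:Z) (2 * N)%:Z)
          \sum_(n <- irange 1 N%:Z)
            f0 (x1, x2) * f1 (x1 + n, x2) * f2 (x1, x2 + n) * f3 n.

Lemma step0 : Sraw = \sum_(x <- W2) f0 x * F x.
Proof.
rewrite /Sraw /W2 sum_pairs.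
have inner : forall a b, \sum_(n <- irange 1 N%:Z) f0 (a,b) * f1 (a+n,b) * f2 (a,b+n) * f3 n
   = f0 (a,b) * F (a,b).
  move=> a b; rewrite /F mulr_sumr (@sum_supp _ _ (irange 1 N%:Z) W); last first.
  - move=> n /mulnz /andP[_ /s3 hn]; rewrite mem_irange ?memW /M; lia.
  - exact: Wu.
  - exact: irange_uniq.
  by apply: eq_bigr => n _; rewrite /= !mulrA.
under eq_bigr do under eq_bigr do rewrite inner.
transitivity (\sum_(a <- irange (- (2 * N)%:Z) (2 * N)%:Z) \sum_(b <- W) f0 (a,b) * F (a,b)).
  apply: eq_bigr => a _; apply: sum_supp; [exact: irange_uniq| exact: Wu|].
  move=> b /mulnz /andP[/s0 hb _]; move: hb; rewrite /box /= mem_irange ?memW /M; lia.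
apply: sum_supp; [exact: irange_uniq| exact: Wu|].
move=> a /sum_nz [b /mulnz /andP[/s0 hb _]]; move: hb; rewrite /box /= mem_irange ?memW /M; lia.
Qed.

Lemma stepA : cmod (\sum_(x <- W2) f0 x * F x) <= \sum_(x <- W2) cmod (F x).
Proof.
apply: (le_trans (cmod_sum _ _ _ _)); apply: ler_sum => x _; rewrite cmodM.
have := cmod_ge0 _ (F x); have := b0 x; have := cmod_ge0 _ (f0 x); nra.
Qed.

Lemma sizeW2 : size W2 = (w * w)%N.
Proof. exact: size_pairs. Qed.

Lemma stepB : (\sum_(x <- W2) cmod (F x)) ^+ 2 <= (w * w)%:R * \sum_(x <- W2) cmod (F x) ^+ 2.
Proof.
have := @cs_gen R _ W2 (fun x => cmod (F x)) (fun x => cmod (F x) ^+ 2) 1 ler01.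
rewrite sizeW2 mulr1; apply => x; by rewrite mul1r.
Qed.

Lemma sum_mulJ (T : Type) (s : seq T) (H : T -> R[i]) :
  \sum_(x <- s) H x * Num.conj (H x) = (\sum_(x <- s) cmod (H x) ^+ 2)%:C.
Proof. by rewrite raddf_sum; apply: eq_bigr => x _; rewrite mulJ. Qed.

Definition g (h : int) (z : int * int) := f2 z * Num.conj (f2 (z.1, z.2 + h)).
Definition G (h : int) (y : int * int) := \sum_(n <- W) g h (y.1 - n, y.2 + n) * Delta h f3 n.

Lemma stepC : \sum_(x <- W2) F x * Num.conj (F x) =
  \sum_(h <- W) \sum_(y <- W2) (f1 y * Num.conj (f1 (y.1 + h, y.2))) * G h y.
Proof.
pose P (x : int * int) (n m : int) := (f1 (x.1+n,x.2) * f2 (x.1,x.2+n) * f3 n) *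
   Num.conj (f1 (x.1+m,x.2) * f2 (x.1,x.2+m) * f3 m).
have e1 : \sum_(x <- W2) F x * Num.conj (F x) = \sum_(x <- W2) \sum_(n <- W) \sum_(m <- W) P x n m.
  apply: eq_bigr => x _; rewrite /F rmorph_sum mulr_suml; apply: eq_bigr => n _.
  by rewrite mulr_sumr.
rewrite e1 exchange_big /=; under eq_bigr do rewrite exchange_big /=.
have e2 : forall n m, \sum_(x <- W2) P x n m = \sum_(y <- W2) P (y.1 - n, y.2) n m.
  move=> n m; apply: (@sum_shift' _ _ W2 (sh (-n, 0))); [exact: sh_inj | exact: W2u | |].
    move=> x /mulnz /andP[/mulnz /andP[/mulnz /andP[h1 h2] h3] _].
    move: (s1 _ h1) (s2 _ h2) (s3 _ h3).
    rewrite mem_map_sh !memW2 /box /M /=; lia.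
  by move=> y; rewrite /sh /= addr0.
under eq_bigr => n _ do under eq_bigr => m _ do rewrite e2.
under eq_bigr do rewrite exchange_big /=.
have e3 : forall n y, \sum_(m <- W) P (y.1 - n, y.2) n m = \sum_(h <- W) P (y.1 - n, y.2) n (h + n).
  move=> n y; apply: (@sum_shift' _ _ W (fun h => h + n)); [exact: addc_inj | exact: Wu | | by []].
  move=> m /mulnz /andP[/mulnz /andP[_ h3] /conjnz /mulnz /andP[_ h3']].
  move: (s3 _ h3) (s3 _ h3'); rewrite mem_map_add !memW /M; lia.
under eq_bigr => n _ do under eq_bigr => y _ do rewrite e3.
under eq_bigr do rewrite exchange_big /=.
rewrite exchange_big /=.
under eq_bigr do rewrite exchange_big /=.
apply: eq_bigr => h _; apply: eq_bigr => [[a b]] _; rewrite /G mulr_sumr; apply: eq_bigr => n _.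
rewrite /P /g /Delta /= subrK.
rewrite (_ : a - n + (h + n) = a + h); last by ring.
rewrite (_ : b + (h + n) = b + n + h); last by ring.
rewrite (addrC h n) !rmorphM.
ring.
Qed.

Lemma stepC' : \sum_(x <- W2) cmod (F x) ^+ 2 <= \sum_(h <- W) \sum_(y <- W2) cmod (G h y).
Proof.
rewrite -(cmodR _ (\sum_(x <- W2) cmod (F x) ^+ 2)); last first.
  by apply: sumr_ge0 => x _; apply: sqr_ge0.
rewrite -sum_mulJ stepC.
apply: (le_trans (cmod_sum _ _ _ _)); apply: ler_sum => h _.
apply: (le_trans (cmod_sum _ _ _ _)); apply: ler_sum => y _.
by apply: cmod_mul_le; apply: cmod_mulJ_le1.
Qed.

Lemma stepD : (\sum_(h <- W) \sum_(y <- W2) cmod (G h y)) ^+ 2 <=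
   (w * (w * w))%:R * \sum_(h <- W) \sum_(y <- W2) cmod (G h y) ^+ 2.
Proof.
have := @cs_gen R _ W (fun h => \sum_(y <- W2) cmod (G h y))
   (fun h => \sum_(y <- W2) cmod (G h y) ^+ 2) (w * w)%:R (ler0n _ _).
rewrite -natrM; apply => h.
have := @cs_gen R _ W2 (fun y => cmod (G h y)) (fun y => cmod (G h y) ^+ 2) 1 ler01.
rewrite sizeW2 mulr1; apply => y; by rewrite mul1r.
Qed.

Definition A (h k : int) := \sum_(z <- W2) g h z * Num.conj (g h (z.1 - k, z.2 + k)).
Definition B (h k : int) := \sum_(n <- W) Delta h f3 n * Num.conj (Delta h f3 (n + k)).

Lemma stepE : \sum_(h <- W) \sum_(y <- W2) G h y * Num.conj (G h y) =
   \sum_(h <- W) \sum_(k <- W) A h k * B h k.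
Proof.
apply: eq_bigr => h _.
pose Q (y : int * int) (n m : int) := (g h (y.1 - n, y.2 + n) * Delta h f3 n) *
   Num.conj (g h (y.1 - m, y.2 + m) * Delta h f3 m).
have e1 : \sum_(y <- W2) G h y * Num.conj (G h y) =
    \sum_(y <- W2) \sum_(n <- W) \sum_(m <- W) Q y n m.
  apply: eq_bigr => y _; rewrite /G rmorph_sum mulr_suml; apply: eq_bigr => n _.
  by rewrite mulr_sumr.
rewrite e1 exchange_big /=; under eq_bigr do rewrite exchange_big /=.
have e2 : forall n m, \sum_(y <- W2) Q y n m = \sum_(z <- W2) Q (sh (n, -n) z) n m.
  move=> n m; symmetry.
  apply: (@sum_shift _ _ W2 (sh (n, -n)) (fun y => Q y n m)); [exact: sh_inj | exact: W2u |].
  move=> y /mulnz /andP[/mulnz /andP[hg hD] _].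
  move: hg => /mulnz /andP[h2 _]; move: hD => /mulnz /andP[h3 _].
  move: (s2 _ h2) (s3 _ h3); rewrite mem_map_sh !memW2 /box /M /=; lia.
under eq_bigr => n _ do under eq_bigr => m _ do rewrite e2.
under eq_bigr do rewrite exchange_big /=.
have e3 : forall n z, \sum_(m <- W) Q (sh (n, -n) z) n m =
    \sum_(k <- W) Q (sh (n, -n) z) n (k + n).
  move=> n z; apply: (@sum_shift' _ _ W (fun k => k + n)); [exact: addc_inj | exact: Wu | | by []].
  move=> m /mulnz /andP[/mulnz /andP[_ hD] /conjnz /mulnz /andP[_ hD']].
  move: hD => /mulnz /andP[h3 _]; move: hD' => /mulnz /andP[h3' _].
  move: (s3 _ h3) (s3 _ h3'); rewrite mem_map_add !memW /M; lia.
under eq_bigr => n _ do under eq_bigr => z _ do rewrite e3.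
under eq_bigr do rewrite exchange_big /=.
rewrite exchange_big /=.
under eq_bigr do rewrite exchange_big /=.
apply: eq_bigr => k _; rewrite /A /B mulr_suml; apply: eq_bigr => [[a b]] _.
rewrite mulr_sumr; apply: eq_bigr => n _.
rewrite /Q /sh /= addrK subrK.
rewrite (_ : a + n - (k + n) = a - k); last by ring.
rewrite (_ : b - n + (k + n) = b + k); last by ring.
rewrite (addrC k n) !rmorphM.
ring.
Qed.

Lemma cmodA h k : cmod (A h k) <= (w * w)%:R.
Proof.
rewrite -sizeW2; apply: sum_cmod_le1 => z; apply: cmod_mulJ_le1; exact: cmod_mulJ_le1.
Qed.

Lemma stepE' : \sum_(h <- W) \sum_(y <- W2) cmod (G h y) ^+ 2 <=
   (w * w)%:R * \sum_(h <- W) \sum_(k <- W) cmod (B h k).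
Proof.
have eT : (\sum_(h <- W) \sum_(y <- W2) cmod (G h y) ^+ 2)%:C =
    \sum_(h <- W) \sum_(y <- W2) G h y * Num.conj (G h y).
  by rewrite raddf_sum; apply: eq_bigr => h _; rewrite sum_mulJ.
rewrite -(cmodR _ (\sum_(h <- W) \sum_(y <- W2) cmod (G h y) ^+ 2)); last first.
  by apply: sumr_ge0 => h _; apply: sumr_ge0 => y _; apply: sqr_ge0.
rewrite eT stepE mulr_sumr.
apply: (le_trans (cmod_sum _ _ _ _)); apply: ler_sum => h _; rewrite mulr_sumr.
apply: (le_trans (cmod_sum _ _ _ _)); apply: ler_sum => k _; rewrite cmodM.
by apply: ler_wpM2r; [exact: cmod_ge0 | exact: cmodA].
Qed.

Lemma stepF : (\sum_(h <- W) \sum_(k <- W) cmod (B h k)) ^+ 2 <=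
   (w * w)%:R * \sum_(h <- W) \sum_(k <- W) cmod (B h k) ^+ 2.
Proof.
have := @cs_gen R _ W (fun h => \sum_(k <- W) cmod (B h k))
   (fun h => \sum_(k <- W) cmod (B h k) ^+ 2) w%:R (ler0n _ _).
rewrite -natrM; apply => h.
have := @cs_gen R _ W (fun k => cmod (B h k)) (fun k => cmod (B h k) ^+ 2) 1 ler01.
rewrite mulr1; apply => y; by rewrite mul1r.
Qed.

Definition U3sum := \sum_(x \in [set: int]) \sum_(h1 \in [set: int])
               \sum_(h2 \in [set: int]) \sum_(h3 \in [set: int])
                 Delta h1 (Delta h2 (Delta h3 f3)) x.

Lemma suppX x l k h : Delta l (Delta k (Delta h f3)) x != 0 ->
   [&& x \in W, l \in W, k \in W & h \in W].
Proof.
move=> /mulnz /andP[hE /conjnz hE'].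
move: hE => /mulnz /andP[hD /conjnz hD'].
move: hD => /mulnz /andP[h3 /conjnz h3h].
move: hD' => /mulnz /andP[h3k _].
move: hE' => /mulnz /andP[hDl _]; move: hDl => /mulnz /andP[h3l _].
move: (s3 _ h3) (s3 _ h3h) (s3 _ h3k) (s3 _ h3l); rewrite !memW /M; lia.
Qed.

Lemma lvl4 x l k : \sum_(h \in [set: int]) Delta l (Delta k (Delta h f3)) x =
   \sum_(h <- W) Delta l (Delta k (Delta h f3)) x.
Proof. apply: fsT; [exact: Wu | by move=> h /suppX /and4P[_ _ _ ->]]. Qed.

Lemma lvl3 x l : \sum_(k \in [set: int]) \sum_(h \in [set: int]) Delta l (Delta k (Delta h f3)) x =
   \sum_(k <- W) \sum_(h <- W) Delta l (Delta k (Delta h f3)) x.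
Proof.
under eq_fsbigr => k _ do rewrite lvl4.
apply: fsT; [exact: Wu | by move=> k /sum_nz [h /suppX /and4P[_ _ -> _]]].
Qed.

Lemma lvl2 x : \sum_(l \in [set: int]) \sum_(k \in [set: int]) \sum_(h \in [set: int])
     Delta l (Delta k (Delta h f3)) x =
   \sum_(l <- W) \sum_(k <- W) \sum_(h <- W) Delta l (Delta k (Delta h f3)) x.
Proof.
under eq_fsbigr => l _ do rewrite lvl3.
apply: fsT; [exact: Wu | by move=> l /sum_nz [k /sum_nz [h /suppX /and4P[_ -> _ _]]]].
Qed.

Lemma lvl1 : U3sum = \sum_(x <- W) \sum_(l <- W) \sum_(k <- W) \sum_(h <- W)
     Delta l (Delta k (Delta h f3)) x.
Proof.
rewrite /U3sum; under eq_fsbigr => x _ do rewrite lvl2.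
apply: fsT; [exact: Wu | by move=> x /sum_nz [l /sum_nz [k /sum_nz [h /suppX /and4P[-> _ _ _]]]]].
Qed.

Lemma stepG : (\sum_(h <- W) \sum_(k <- W) cmod (B h k) ^+ 2)%:C = U3sum.
Proof.
have eT : (\sum_(h <- W) \sum_(k <- W) cmod (B h k) ^+ 2)%:C =
    \sum_(h <- W) \sum_(k <- W) B h k * Num.conj (B h k).
  by rewrite raddf_sum; apply: eq_bigr => h _; rewrite sum_mulJ.
rewrite eT.
have e1 : forall h k, B h k * Num.conj (B h k) =
    \sum_(n <- W) \sum_(l <- W) Delta l (Delta k (Delta h f3)) n.
  move=> h k; rewrite /B rmorph_sum mulr_suml; apply: eq_bigr => n _.
  rewrite mulr_sumr.
  apply: (@sum_shift' _ _ W (fun l => l + n)); [exact: addc_inj | exact: Wu | |].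
    move=> m /mulnz /andP[hE /conjnz hE'].
    move: hE => /mulnz /andP[hD _]; move: hD => /mulnz /andP[h3 _].
    move: hE' => /mulnz /andP[hD' _]; move: hD' => /mulnz /andP[h3' _].
    move: (s3 _ h3) (s3 _ h3'); rewrite mem_map_add !memW /M; lia.
  by move=> l; rewrite /Delta (addrC l n).
under eq_bigr => h _ do under eq_bigr => k _ do rewrite e1.
under eq_bigr do rewrite exchange_big /=.
rewrite exchange_big /=.
under eq_bigr => n _ do under eq_bigr => h _ do rewrite exchange_big /=.
under eq_bigr do rewrite exchange_big /=.
under eq_bigr => n _ do under eq_bigr => l _ do rewrite exchange_big /=.
by rewrite lvl1.
Qed.

Lemma final_main : cmod ((((4 * N + 1) ^ 2 * N)%:R)^-1 * Sraw) <=
   (9 ^ 3)%:R * (Num.sqrt (N%:R))^-1 * gowersU3 f3.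
Proof.
rewrite cmodM cmod_natV step0.
have eG : gowersU3 f3 = powR (\sum_(h <- W) \sum_(k <- W) cmod (B h k) ^+ 2) (8^-1).
  by rewrite /gowersU3 -/(U3sum) -stepG cmodR //; apply: sumr_ge0 => h _; apply: sumr_ge0 => k _; apply: sqr_ge0.
rewrite eG.
apply: (@final_real R (cmod (\sum_(x <- W2) f0 x * F x)) (\sum_(x <- W2) cmod (F x))
  (\sum_(x <- W2) cmod (F x) ^+ 2) (\sum_(h <- W) \sum_(y <- W2) cmod (G h y))
  (\sum_(h <- W) \sum_(y <- W2) cmod (G h y) ^+ 2) (\sum_(h <- W) \sum_(k <- W) cmod (B h k))
  (\sum_(h <- W) \sum_(k <- W) cmod (B h k) ^+ 2) w N).
all: first [ exact: stepA | exact: stepB | exact: stepC' | exact: stepD | exact: stepE'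
  | exact: stepF | exact: cmod_ge0
  | (by rewrite /w size_irange /M; lia)
  | (by rewrite expnSr leq_mul2r leq_exp2r // (_ : (N <= 4 * N + 1)%N) ?orbT //; lia)
  | (by apply: sumr_ge0 => x _; apply: cmod_ge0)
  | (by apply: sumr_ge0 => h _; apply: sumr_ge0 => y _; apply: cmod_ge0)
  | (by apply: sumr_ge0 => h _; apply: sumr_ge0 => y _; apply: sqr_ge0)
  | (by []) ].
Qed.


End Main.

End Lemma34Proof.

Theorem lemma3p4 (R : realType) :
  exists C : R, 0 < C /\
  forall (N : nat), (0 < N)%N ->
  forall (f0 f1 f2 : int * int -> R[i]) (f3 : int -> R[i]),
    (forall x, cmod (f0 x) <= 1) -> (forall x, cmod (f1 x) <= 1) ->
    (forall x, cmod (f2 x) <= 1) -> (forall n, cmod (f3 n) <= 1) ->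
    (forall x : int * int,
       ~ (`|x.1| <= (2 * N)%:Z /\ `|x.2| <= (2 * N)%:Z) ->
       f0 x = 0 /\ f1 x = 0 /\ f2 x = 0) ->
    (forall n : int, ~ (1 <= n /\ n <= N%:Z) -> f3 n = 0) ->
    cmod ((((4 * N + 1) ^ 2 * N)%:R)^-1 *
          \sum_(x1 <- irange (- (2 * N)%:Z) (2 * N)%:Z)
          \sum_(x2 <- irange (- (2 * N)%:Z) (2 * N)%:Z)
          \sum_(n <- irange 1 N%:Z)
            f0 (x1, x2) * f1 (x1 + n, x2) * f2 (x1, x2 + n) * f3 n)
    <= C * (Num.sqrt (N%:R))^-1 * gowersU3 f3.
Proof.
exists (9 ^ 3)%:R; split; first by rewrite ltr0n expn_gt0.
move=> N N0 f0 f1 f2 f3 h0 h1 h2 h3 hs hs3.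
apply: final_main; by [].
Qed.
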